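(* Let $\alpha:\mathbb{Z}\curvearrowright X$ be a minimal continuous action on a compact Hausdorff space $X$, let $K$ be a topological group and $K_0\subset K$ a closed subgroup. Let $c:\mathbb{Z}\times X\to K_0$ be a continuous cocycle such that $c(n,x)=f(\alpha_n(x))f(x)^{-1}$ for all $n\in\mathbb{Z}$, $x\in X$, for some continuous map $f:X\to K$. Then there is a continuous map $f':X\to K_0$ such that $c(n,x)=f'(\alpha_n(x))f'(x)^{-1}$ for all $n\in\mathbb{Z}$ and $x\in X$.
   Context: A continuous map $c:G\times X\to K$ for an action $G\curvearrowright X$ is a cocycle if $c(g_1g_2,x)=c(g_1,g_2x)c(g_2,x)$ for all $g_1,g_2\in G$, $x\in X$. *)

(* Defs.v *)
From HB Require Import structures.
From mathcomp Require Import all_boot all_order all_algebra.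
From mathcomp Require Import all_classical all_reals all_analysis.
Set Implicit Arguments. Unset Strict Implicit. Unset Printing Implicit Defensive.
Import Order.TTheory GRing.Theory Num.Theory.
Local Open Scope classical_set_scope.

Definition is_topological_group (K : topologicalType)
  (mul : K -> K -> K) (inv : K -> K) (e : K) : Prop :=
  [/\ (forall a b c, mul a (mul b c) = mul (mul a b) c),
      (forall a, mul e a = a /\ mul a e = a),
      (forall a, mul (inv a) a = e /\ mul a (inv a) = e),
      continuous (fun p : K * K => mul p.1 p.2) &
      continuous inv].

Definition is_closed_subgroup (K : topologicalType)
  (mul : K -> K -> K) (inv : K -> K) (e : K) (K0 : set K) : Prop :=
  [/\ closed K0, K0 e,
      (forall a b, K0 a -> K0 b -> K0 (mul a b)) &
      (forall a, K0 a -> K0 (inv a))].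

Definition is_Z_action (X : topologicalType) (alpha : int -> X -> X) : Prop :=
  [/\ (forall x, alpha 0%R x = x),
      (forall m n x, alpha (m + n)%R x = alpha m (alpha n x)) &
      (forall n, continuous (alpha n))].

Definition minimal_Z_action (X : topologicalType) (alpha : int -> X -> X) : Prop :=
  forall x : X, closure [set alpha n x | n in [set: int]] = [set: X].

Definition is_cocycle (X K : Type) (mul : K -> K -> K)
  (alpha : int -> X -> X) (c : int -> X -> K) : Prop :=
  forall m n x, c (m + n)%R x = mul (c m (alpha n x)) (c n x).

(* Main.v *)
Require Import Defs.
From HB Require Import structures.
From mathcomp Require Import all_boot all_order all_algebra.
From mathcomp Require Import all_classical all_reals all_analysis.
Local Open Scope classical_set_scope.

Theorem lemma2p3 (X K : topologicalType) (alpha : int -> X -> X)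
  (mul : K -> K -> K) (inv : K -> K) (e : K) (K0 : set K)
  (c : int -> X -> K) (f : X -> K) :
  compact [set: X] -> hausdorff_space X ->
  is_Z_action alpha -> minimal_Z_action alpha ->
  is_topological_group mul inv e ->
  is_closed_subgroup mul inv e K0 ->
  (forall n x, K0 (c n x)) -> (forall n, continuous (c n)) ->
  is_cocycle mul alpha c ->
  continuous f ->
  (forall n x, c n x = mul (f (alpha n x)) (inv (f x))) ->
  exists f' : X -> K, continuous f' /\ (forall x, K0 (f' x)) /\
    (forall n x, c n x = mul (f' (alpha n x)) (inv (f' x))).
Proof.
move=> _ _ _ hmin [massoc hid hinv hmulc hinvc] [hcl _ _ _] hK0 _ _ hf hcf.
have uinv : forall a b, mul a b = e -> b = inv a.
  move=> a b hab.
  rewrite -(proj1 (hid b)) -(proj1 (hinv a)) -massoc hab.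
  exact: (proj2 (hid _)).
have invmul : forall a b, inv (mul a b) = mul (inv b) (inv a).
  move=> a b; symmetry; apply: uinv.
  rewrite -massoc (massoc b) (proj2 (hinv b)) (proj1 (hid _)).
  exact: (proj2 (hinv a)).
have invinv : forall a, inv (inv a) = a.
  move=> a; symmetry; apply: uinv; exact: (proj1 (hinv a)).
have [[x0 _]|nX] := pselect (exists x : X, True); last first.
  exists (fun _ => e); split; first exact: cst_continuous.
  by split => [x|n x]; exfalso; apply: nX; exists x.
pose k := inv (f x0).
pose g := fun y => mul (f y) k.
have gc : continuous g.
  move=> y; rewrite /g.
  apply: (continuous_comp (f := fun y => (f y, k)) (g := fun p : K * K => mul p.1 p.2)).
    apply: cvg_pair; first exact: hf.
    exact: cvg_cst.
  exact: hmulc.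
have Sc : closed (g @^-1` K0) by apply: preimage_closed => // z _; exact: gc.
have sub : [set alpha n x0 | n in [set: int]] `<=` g @^-1` K0.
  move=> y [n _ <-]; have := hK0 n x0; rewrite hcf; exact.
have allS : forall y, K0 (g y).
  move=> y.
  have : closure [set alpha n x0 | n in [set: int]] y by rewrite hmin.
  move/(closureS sub); rewrite -(proj1 (closure_id _) Sc); exact.
exists g; split => //; split => //.
move=> n x; rewrite hcf.
change (mul (f (alpha n x)) (inv (f x)) = mul (mul (f (alpha n x)) k) (inv (mul (f x) k))).
rewrite invmul /k invinv.
rewrite -(massoc (f (alpha n x))) (massoc (inv (f x0)) (f x0)) (proj1 (hinv (f x0))).
by rewrite (proj1 (hid _)).
Qed.
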